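(* For a supersimple $2$-$(n,4,\lambda)$ design $\mathcal{D}=(\Omega,\mathcal{B})$, the following are equivalent: (i) for all $a,b,c,d\in\Omega$, $[a,b]^{[c,d]}=[a^{[c,d]},b^{[c,d]}]$; (ii) for all $a,b,c\in\Omega$, $[a,b]^{[b,c]}=[a^{[b,c]},c]$; (iii) for all $a,b,c\in\Omega$, $[b,c]=[a,b,c,a^{[b,c]}]$. In addition, if these conditions hold, then $\mathcal{L}_\infty(\mathcal{D})$ (for $\infty\in\Omega$) is a group of automorphisms of $\mathcal{D}$.
   Context: A $2$-$(n,4,\lambda)$ design $(\Omega,\mathcal{B})$: $n$ points, a multiset of $4$-subsets (lines), every $2$-subset in exactly $\lambda$ lines; supersimple: distinct lines meet in at most two points. For distinct $a,b$ with lines $\{a,b,a_i,b_i\}$ through them, $[a,b]:=(a,b)\prod_i(a_i,b_i)\in\operatorname{Sym}(\Omega)$; $[a,a]:=1$. Permutations act on the right ($x^g$), products composed left to right, and $g^h=h^{-1}gh$. Move sequence $[a_0,\dots,a_k]:=[a_0,a_1][a_1,a_2]\cdots[a_{k-1},a_k]$; $\mathcal{L}_\infty(\mathcal{D})$ is the set of all move sequences starting at $\infty$. *)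

(* Defs.v *)
From mathcomp Require Import all_boot all_fingroup.
Set Implicit Arguments. Unset Strict Implicit. Unset Printing Implicit Defensive.


Section Designs.
Variable T : finType.

(* Blocks are given as a list (multiset) of subsets of the point set T. *)

Definition design_2_4 (n lambda : nat) (B : seq {set T}) : Prop :=
  [/\ #|T| = n,
      (forall L, L \in B -> #|L| = 4)
    & (forall x y : T, x != y ->
         count (fun L : {set T} => (x \in L) && (y \in L)) B = lambda)].

Definition supersimple (B : seq {set T}) : Prop :=
  forall i j, i < size B -> j < size B -> i != j ->
    #|nth set0 B i :&: nth set0 B j| <= 2.

Definition pairperm (S : {set T}) : {perm T} :=
  match enum S with
  | [:: x; y] => tperm x y
  | _ => 1%g
  end.

Definition br (B : seq {set T}) (a b : T) : {perm T} :=
  if a == b then 1%g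
  else (tperm a b *
       \prod_(L <- B | (a \in L) && (b \in L)) pairperm (L :\ a :\ b))%g.

(* move sequence [a, s_1, ..., s_k] = [a,s_1][s_1,s_2]...[s_{k-1},s_k] *)
Fixpoint moveseq (B : seq {set T}) (a : T) (s : seq T) : {perm T} :=
  match s with
  | [::] => 1%g
  | b :: s' => (br B a b * moveseq B b s')%g
  end.

Definition Linf (B : seq {set T}) (oo : T) (g : {perm T}) : Prop :=
  exists s : seq T, g = moveseq B oo s.

Definition design_aut (B : seq {set T}) (g : {perm T}) : Prop :=
  perm_eq [seq (g @: L) | L : {set T} <- B] B.

End Designs.

(* Main.v *)
Require Import Defs.
From mathcomp Require Import all_boot all_fingroup.
Local Open Scope group_scope.
Set Implicit Arguments. Unset Strict Implicit.

Section Comb.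
Variable T : finType.

Definition Pp (Bs : seq {set T}) p q : {perm T} :=
  \prod_(L <- Bs | (p \in L) && (q \in L)) pairperm (L :\ p :\ q).

Lemma uniq_card (s : seq T) (A : {set T}) : uniq s -> {subset s <= A} -> size s <= #|A|.
Proof.
move=> u sub; rewrite -(card_uniqP u); apply: subset_leq_card; exact/subsetP.
Qed.

Lemma pairperm2 (S : {set T}) : #|S| = 2 ->
  exists x y, [/\ x != y, S = [set x; y] & pairperm S = tperm x y].
Proof.
rewrite cardE /pairperm => hs.
have u := enum_uniq S.
have mS : forall w, (w \in S) = (w \in enum S) by move=> w; rewrite mem_enum.
move: hs u mS; case: (enum S) => [|x [|y [|? ?]]] //= _.
move=> /andP[nxy _] mS; rewrite inE in nxy.
exists x, y; split=> //; apply/setP => w; by rewrite mS !inE.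
Qed.

Lemma pairperm_fix (S : {set T}) w : w \notin S -> pairperm S w = w.
Proof.
rewrite /pairperm => hw.
have mS : forall w, (w \in S) = (w \in enum S) by move=> w'; rewrite mem_enum.
move: mS; case: (enum S) => [|x [|y [|? ?]]] mS; rewrite ?perm1 //.
apply: tpermD; apply: contraNneq hw => <-; by rewrite mS !inE eqxx ?orbT.
Qed.

Lemma Pp_fix Bs p q w : (w == p) || (w == q) -> Pp Bs p q w = w.
Proof.
move=> hw; rewrite /Pp; apply: (big_ind (fun g : {perm T} => g w = w)).
- by rewrite perm1.
- by move=> g h hg hh; rewrite permM hg hh.
- move=> L _; apply: pairperm_fix; case/orP: hw => /eqP ->; by rewrite !inE eqxx ?andbF.
Qed.

Lemma ss_tail (L0 : {set T}) Bs : supersimple (L0 :: Bs) -> supersimple Bs.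
Proof. move=> H i j hi hj hij; exact: (H i.+1 j.+1). Qed.

Lemma ss_head (L0 : {set T}) Bs L : supersimple (L0 :: Bs) -> L \in Bs -> #|L0 :&: L| <= 2.
Proof.
move=> H hL; have := H 0 (index L Bs).+1 erefl; rewrite /= nth_index //; apply => //.
by rewrite ltnS index_mem.
Qed.

Lemma card2 (L : {set T}) p q : p != q -> p \in L -> q \in L -> #|L| = 4 -> #|L :\ p :\ q| = 2.
Proof.
move=> npq hp hq h4.
have := cardsD1 p L; rewrite hp h4 => /eqP; rewrite eqSS => /eqP e1.
have := cardsD1 q (L :\ p); rewrite !inE eq_sym npq hq -e1 /= => /eqP.
by rewrite eqSS => /eqP <-.
Qed.

Lemma Pp_spec p q (Bs : seq {set T}) z : p != q ->
  (forall L, L \in Bs -> #|L| = 4) -> supersimple Bs -> z != p -> z != q ->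
  (Pp Bs p q z = z /\ forall L, L \in Bs -> p \in L -> q \in L -> z \notin L) \/
  (exists2 L, L \in Bs & [/\ p \in L, q \in L, z \in L, Pp Bs p q z \in L &
       [&& Pp Bs p q z != z, Pp Bs p q z != p & Pp Bs p q z != q]]).
Proof.
move=> npq; elim: Bs z => [|L0 Bs IH] z H4 Hs nzp nzq.
  by left; rewrite /Pp big_nil perm1.
have H4' : forall L, L \in Bs -> #|L| = 4 by move=> L hL; apply: H4; rewrite inE hL orbT.
have Hs' := ss_tail Hs.
rewrite /Pp big_cons -/(Pp Bs p q).
case C: ((p \in L0) && (q \in L0)); last first.
  case: (IH z H4' Hs' nzp nzq) => [[e1 e2]|[L hL hh]].
    left; split => // L; rewrite inE => /orP[/eqP -> hp hq|]; last exact: e2.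
    by rewrite hp hq in C.
  by right; exists L => //; rewrite inE hL orbT.
case/andP: C => hp hq.
have [x [y [nxy ES EP]]] := pairperm2 (card2 npq hp hq (H4 L0 (mem_head _ _))).
rewrite EP permM.
have inS : forall w, (w \in [set x; y]) = [&& w != q, w != p & w \in L0].
  by move=> w; rewrite -ES !inE.
case hz: (z \in L0).
  have zS : z \in [set x; y] by rewrite inS nzp nzq hz.
  set w := tperm x y z.
  have wS : w \in [set x; y].
    by move: zS; rewrite !inE /w => /orP[/eqP->|/eqP->]; rewrite ?tpermL ?tpermR eqxx ?orbT.
  have nwz : w != z.
    by move: zS; rewrite !inE /w => /orP[/eqP->|/eqP->]; rewrite ?tpermL ?tpermR // eq_sym.
  move: (wS); rewrite inS => /and3P[nwq nwp wL].
  case: (IH w H4' Hs' nwp nwq) => [[e1 e2]|[L hL [hpL hqL hwL _ _]]].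
    right; exists L0; first exact: mem_head.
    by rewrite e1 hp hq hz wL nwz nwp nwq.
  exfalso; have := ss_head Hs hL.
  have : 3 <= #|L0 :&: L|.
    apply: (@uniq_card [:: p; q; w]).
      by rewrite /= !inE negb_or npq eq_sym nwp eq_sym nwq.
    by move=> t; rewrite !inE => /or3P[] /eqP->; rewrite ?hp ?hq ?wL ?hpL ?hqL ?hwL.
  by move=> a b; have := leq_trans a b.
have zS : z \notin [set x; y] by rewrite inS hz !andbF.
rewrite (tpermD _ _); last first.
  by apply: contraNneq zS => <-; rewrite !inE eqxx orbT.
  by apply: contraNneq zS => <-; rewrite !inE eqxx.
case: (IH z H4' Hs' nzp nzq) => [[e1 e2]|[L hL hh]].
  left; split => // L; rewrite inE => /orP[/eqP -> |]; last exact: e2.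
  by rewrite hz.
by right; exists L => //; rewrite inE hL orbT.
Qed.


Variable B : seq {set T}.
Hypothesis H4 : forall L, L \in B -> #|L| = 4.
Hypothesis Hss : supersimple B.

Lemma br_def a b : a != b -> br B a b = tperm a b * Pp B a b.
Proof. by move=> nab; rewrite /br (negbTE nab). Qed.

Lemma brxx a : br B a a = 1.
Proof. by rewrite /br eqxx. Qed.

Lemma br_sym a b : br B a b = br B b a.
Proof.
rewrite /br eq_sym; case: eqP => // _; rewrite tpermC; congr (_ * _).
apply: eq_big => [L|L _]; first by rewrite andbC.
by rewrite !setDDl setUC.
Qed.

Lemma br_l a b : br B a b a = b.
Proof.
case: (eqVneq a b) => [->|nab]; first by rewrite brxx perm1.
by rewrite br_def // permM tpermL Pp_fix // eqxx orbT.
Qed.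

Lemma br_r a b : br B a b b = a.
Proof. by rewrite br_sym br_l. Qed.

Lemma br_out a b z : a != b -> z != a -> z != b -> br B a b z = Pp B a b z.
Proof. by move=> nab nza nzb; rewrite br_def // permM tpermD // eq_sym. Qed.

Lemma uniq_line L L' p q z : L \in B -> L' \in B -> uniq [:: p; q; z] ->
  {subset [:: p; q; z] <= L} -> {subset [:: p; q; z] <= L'} -> L = L'.
Proof.
move=> hL hL' u s1 s2.
case: (eqVneq (index L B) (index L' B)) => e.
  by rewrite -(nth_index set0 hL) e nth_index.
have i1 : index L B < size B by rewrite index_mem.
have i2 : index L' B < size B by rewrite index_mem.
have := Hss i1 i2 e; rewrite !nth_index //.
have : 3 <= #|L :&: L'|.
  by apply: (@uniq_card [:: p; q; z]) => // t ht; rewrite inE s1 ?s2.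
by move=> a b; have := leq_trans a b.
Qed.

Lemma four L (x y u v t : T) : L \in B -> uniq [:: x; y; u; v] ->
  {subset [:: x; y; u; v] <= L} -> t \in L -> t \in [:: x; y; u; v].
Proof.
move=> hL un sub ht; apply/negPn/negP => nt.
suff: 5 <= #|L| by rewrite H4.
apply: (@uniq_card (t :: [:: x; y; u; v])).
  by rewrite /= nt.
by move=> w; rewrite inE => /orP[/eqP->|]; [exact: ht| exact: sub].
Qed.

Lemma uniq3 (x y u : T) : x != y -> x != u -> y != u -> uniq [:: x; y; u].
Proof. by move=> h1 h2 h3; rewrite /= !inE !negb_or h1 h2 h3. Qed.

Lemma uniq4 (x y u v : T) : x != y -> x != u -> x != v -> y != u -> y != v -> u != v ->
  uniq [:: x; y; u; v].
Proof. by move=> h1 h2 h3 h4 h5 h6; rewrite /= !inE !negb_or h1 h2 h3 h4 h5 h6. Qed.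

Lemma brK a b z : br B a b (br B a b z) = z.
Proof.
case: (eqVneq a b) => [->|nab]; first by rewrite brxx !perm1.
case: (eqVneq z a) => [->|nza]; first by rewrite br_l br_r.
case: (eqVneq z b) => [->|nzb]; first by rewrite br_r br_l.
rewrite (br_out nab nza nzb).
case: (Pp_spec nab H4 Hss nza nzb) => [[e _]|[L hL [hp hq hz hw /and3P[nwz nwa nwb]]]].
  by rewrite e br_out // e.
move: hw nwz nwa nwb; set w := Pp B a b z => hw nwz nwa nwb.
rewrite br_out //.
case: (Pp_spec nab H4 Hss nwa nwb) => [[_ e]|[L' hL' [hp' hq' hw' ht /and3P[ntw nta ntb]]]].
  by rewrite (negbTE (e L hL hp hq)) in hw.
have eL : L' = L.
  apply: (uniq_line hL' hL (uniq3 nab _ _)).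
  - rewrite eq_sym; exact: nwa.
  - rewrite eq_sym; exact: nwb.
  - by move=> t; rewrite !inE => /or3P[] /eqP->.
  - by move=> t; rewrite !inE => /or3P[] /eqP->.
subst L'.
have U : uniq [:: a; b; z; w].
  by apply: uniq4 => //; rewrite eq_sym.
have S : {subset [:: a; b; z; w] <= L} by move=> t; rewrite !inE => /or4P[] /eqP->.
have := four hL U S ht.
by rewrite !inE (negbTE nta) (negbTE ntb) (negbTE ntw) /= orbF => /eqP.
Qed.

Lemma brbr a b : br B a b * br B a b = 1.
Proof. by apply/permP => z; rewrite permM brK perm1. Qed.

Lemma brV a b : (br B a b)^-1 = br B a b.
Proof. exact: mulg1_eq (brbr a b). Qed.

Lemma uniqB : uniq B.
Proof.
apply/(uniqP set0) => i j hi hj e; apply/eqP; apply/negPn/negP => ne.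
have := Hss hi hj ne; rewrite e setIid H4 //; apply: mem_nth; exact: hj.
Qed.

Lemma pres_aut (g : {perm T}) : (forall L, L \in B -> g @: L \in B) -> design_aut B g.
Proof.
move=> hp; have uB := uniqB.
have um : uniq (map (fun L : {set T} => g @: L) B).
  rewrite map_inj_uniq //; apply: imset_inj; exact: perm_inj.
have sub : {subset map (fun L : {set T} => g @: L) B <= B} by move=> L /mapP[L' h ->]; exact: hp.
have [_ e] := uniq_min_size um sub ltac:(by rewrite size_map).
exact: uniq_perm.
Qed.

Lemma br_pres
  (c1 : forall a b c d : T, (br B a b) ^ (br B c d) = br B (br B c d a) (br B c d b))
  c d L : L \in B -> br B c d @: L \in B.
Proof.
move=> hL; set g := br B c d.
have := H4 hL; rewrite cardE.
have un := enum_uniq L.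
have mL : forall w, (w \in L) = (w \in enum L) by move=> w; rewrite mem_enum.
move: un mL; case: (enum L) => [|x [|y [|u [|v' [|]]]]] // un mL _.
have hx : x \in L by rewrite mL !inE eqxx.
have hy : y \in L by rewrite mL !inE eqxx !orbT.
have hu : u \in L by rewrite mL !inE eqxx !orbT.
move: un; rewrite /= !inE !negb_or => /and4P[/and3P[nxy nxu _] /andP[nyu _] _ _].
have nux : u != x by rewrite eq_sym.
have nuy : u != y by rewrite eq_sym.
case: (Pp_spec nxy H4 Hss nux nuy) => [[_ e]|[L' hL' [hx' hy' hu' hv' /and3P[nvu nvx nvy]]]].
  by rewrite (negbTE (e L hL hx hy)) in hu.
rewrite -(br_out nxy nux nuy) in hv' nvu nvx nvy.
move: hv' nvu nvx nvy; set v := br B x y u => hv' nvu nvx nvy.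
have eL : L' = L.
  apply: (uniq_line hL' hL (uniq3 nxy nxu nyu)).
  - by move=> t; rewrite !inE => /or3P[] /eqP->.
  - by move=> t; rewrite !inE => /or3P[] /eqP->.
subst L'.
have key : br B (g x) (g y) (g u) = g v.
  by rewrite -c1 /conjg !permM permK.
have gi : injective g by exact: perm_inj.
have ngxy : g x != g y by rewrite (inj_eq gi).
have nguy : g u != g y by rewrite (inj_eq gi).
have ngux : g u != g x by rewrite (inj_eq gi).
have U4 : uniq [:: x; y; u; v].
  apply: uniq4 => //; by rewrite eq_sym.
have S4 : {subset [:: x; y; u; v] <= L} by move=> t; rewrite !inE => /or4P[] /eqP->.
case: (Pp_spec ngxy H4 Hss ngux nguy) => [[e _]|[L2 hL2 [h1 h2 h3 h4 _]]].
  move: key; rewrite br_out // e => /gi euv; by rewrite euv eqxx in nvu.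
rewrite -br_out // key in h4.
have -> : g @: L = L2.
  apply/eqP; rewrite eqEcard card_imset; last exact: perm_inj.
  rewrite (H4 hL) (H4 hL2) leqnn andbT.
  apply/subsetP => t /imsetP[s hs ->].
  by have := four hL U4 S4 hs; rewrite !inE => /or4P[] /eqP->.
exact: hL2.
Qed.


Lemma moveseq_cat a s t : moveseq B a (s ++ t) = moveseq B a s * moveseq B (last a s) t.
Proof.
elim: s a => [|b s IH] a /=; first by rewrite mul1g.
by rewrite IH mulgA.
Qed.

Lemma c1c2 : (forall a b c d : T, (br B a b) ^ (br B c d) = br B (br B c d a) (br B c d b)) ->
  forall a b c : T, (br B a b) ^ (br B b c) = br B (br B b c a) c.
Proof. by move=> h a b c; rewrite h br_l. Qed.

Lemma c2c3 : (forall a b c : T, (br B a b) ^ (br B b c) = br B (br B b c a) c) ->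
  forall a b c : T, br B b c = moveseq B a [:: b; c; br B b c a].
Proof.
move=> h a b c /=; rewrite mulg1 [br B c _]br_sym -h /conjg brV.
by rewrite !mulgA -(mulgA (br B a b)) brbr mulg1 brbr mul1g.
Qed.

Lemma c3c2 : (forall a b c : T, br B b c = moveseq B a [:: b; c; br B b c a]) ->
  forall a b c : T, (br B a b) ^ (br B b c) = br B (br B b c a) c.
Proof.
move=> h a b c; have E := h a b c; rewrite /= mulg1 in E.
rewrite /conjg brV [RHS]br_sym.
transitivity ((br B a b * br B b c)^-1 * br B b c).
  by rewrite invMg !brV mulgA.
by rewrite {2}E (mulgA (br B a b)) mulKg.
Qed.

Lemma c2c1 : (forall a b c : T, (br B a b) ^ (br B b c) = br B (br B b c a) c) ->
  forall a b c d : T, (br B a b) ^ (br B c d) = br B (br B c d a) (br B c d b).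
Proof.
move=> h2 a b c d; have E := c2c3 h2 a c d; rewrite /= mulg1 in E.
have Eb : br B c d b = (br B a c * (br B c d * br B d (br B c d a))) b by rewrite -E.
rewrite {1}E !conjgM [br B a b]br_sym h2 h2 h2 [RHS]br_sym; congr (br B _ _).
by rewrite Eb !permM.
Qed.

Definition Sgen := [set br B x.1 x.2 | x : T * T].

Lemma ms_in a s : moveseq B a s \in <<Sgen>>.
Proof.
elim: s a => [|b s IH] a /=; first exact: group1.
rewrite groupM // mem_gen //; apply/imsetP; by exists (a, b).
Qed.

Lemma in_Linf (h3 : forall a b c : T, br B b c = moveseq B a [:: b; c; br B b c a]) oo g :
  g \in <<Sgen>> -> Linf B oo g.
Proof.
case/gen_prodgP => n [c hc ->].
elim: n c hc => [|n IH] c hc; first by exists [::]; rewrite big_ord0.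
rewrite big_ord_recr /=.
have [s es] := IH (fun i => c (widen_ord (leqnSn n) i)) (fun i => hc _).
case/imsetP: (hc ord_max) => [[b c'] _ ->] /=.
exists (s ++ [:: b; c'; br B b c' (last oo s)]).
rewrite moveseq_cat -es; congr (_ * _); exact: h3.
Qed.

Lemma ms_pres
  (c1 : forall a b c d : T, (br B a b) ^ (br B c d) = br B (br B c d a) (br B c d b))
  a s L : L \in B -> moveseq B a s @: L \in B.
Proof.
elim: s a L => [|b s IH] a L hL /=.
  by rewrite (eq_imset _ (@perm1 T)) imset_id.
have -> : (br B a b * moveseq B b s) @: L = moveseq B b s @: (br B a b @: L).
  by rewrite -imset_comp; apply: eq_imset => x; rewrite permM.
by apply: IH; apply: br_pres.
Qed.

End Comb.

Theorem lemma2p7 (T : finType) (n lambda : nat) (B : seq {set T})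
  (Hdes : design_2_4 n lambda B) (Hss : supersimple B) :
  let br := br B in
  let c1 := forall a b c d : T,
      (br a b) ^ (br c d) = br (br c d a) (br c d b) in
  let c2 := forall a b c : T,
      (br a b) ^ (br b c) = br (br b c a) c in
  let c3 := forall a b c : T,
      br b c = moveseq B a [:: b; c; br b c a] in
  [/\ (c1 <-> c2), (c2 <-> c3) &
      (c1 -> forall oo : T,
         (exists G : {group {perm T}}, forall g, g \in G <-> Linf B oo g)
         /\ (forall g, Linf B oo g -> design_aut B g))].
Proof.
case: (Hdes) => _ H4 _.
move=> br0 c1 c2 c3; rewrite /c1 /c2 /c3 /br0.
split.
- split; [exact: c1c2 | exact: c2c1 H4 Hss].
- split; [exact: c2c3 H4 Hss | exact: c3c2 H4 Hss].
- move=> h1 oo; split.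
    exists <<Sgen B>>%G => g; split.
      exact: in_Linf (c2c3 H4 Hss (c1c2 h1)) oo g.
    by case=> s ->; exact: ms_in.
  move=> g [s ->]; apply: (pres_aut H4 Hss) => L hL.
  exact: ms_pres H4 Hss h1 oo s L hL.
Qed.
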